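(* Let $C$ be a set. The weight $w:\mathrm{SList}(C)\to(\mathrm{B}\overline{\mathrm{A}_\infty})^{\mathrm{op}}$ is faithful; that is, two morphisms $f,g:L\to L'$ of symmetric lists are equal if and only if $w(f)=w(g)$ in $\overline{\mathrm{A}_\infty}$.
   Context: $\mathrm{SList}(C)$ is the category presented as follows: objects are finite lists of elements of $C$; morphisms are generated by $\mathrm{sw}_{a,b,l}:a::b::l\to b::a::l$ and, for $f:l\to l'$ and $x\in C$, $x::_mf:x::l\to x::l'$; relations: $x::_m-$ is functorial, $\mathrm{sw}_{a,b,l}$ is natural in $l$, $\mathrm{sw}_{b,a,l}\circ\mathrm{sw}_{a,b,l}=\mathrm{Id}$, and $\mathrm{sw}_{b,c,a::l}\circ(b::_m\mathrm{sw}_{a,c,l})\circ\mathrm{sw}_{a,b,c::l}=(c::_m\mathrm{sw}_{a,b,l})\circ\mathrm{sw}_{a,c,b::l}\circ(a::_m\mathrm{sw}_{b,c,l})$. $\overline{\mathrm{A}_\infty}$ is the Coxeter group with generators $(s_i)_{i\in\mathbb{N}}$, relations $s_i^2=e$, $(s_is_{i+1})^3=e$, $(s_is_j)^2=e$ for $|i-j|>1$; $\mathrm{B}G$ is the one-object category with endomorphisms $G$. The weight $w$ is the functor $\mathrm{SList}(C)\to(\mathrm{B}\overline{\mathrm{A}_\infty})^{\mathrm{op}}$ determined by $w(\mathrm{sw}_{a,b,l})=s_0$ and $w(x::_mf)=\sigma(w(f))$, where $\sigma$ is the shift endomorphism $s_i\mapsto s_{i+1}$ (equivalently, induced from the free-monoid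 labelling $\mathrm{sw}\mapsto 0$, $x::_mf\mapsto 1+(\text{label of }f)$ letterwise). *)

(* Defs.v *)
From Stdlib Require Import List.
Import ListNotations.
Set Implicit Arguments.

Section SList.
Variable C : Type.

Inductive shom : list C -> list C -> Type :=
| sid : forall l, shom l l
| scomp : forall l1 l2 l3, shom l2 l3 -> shom l1 l2 -> shom l1 l3
| ssw : forall (a b : C) (l : list C), shom (a :: b :: l) (b :: a :: l)
| scons : forall (x : C) (l l' : list C), shom l l' -> shom (x :: l) (x :: l').

Arguments sid : clear implicits.
Arguments ssw : clear implicits.

Inductive sheq : forall l l' : list C, shom l l' -> shom l l' -> Prop :=
| sheq_refl : forall l l' (f : shom l l'), sheq f f
| sheq_sym : forall l l' (f g : shom l l'), sheq f g -> sheq g f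
| sheq_trans : forall l l' (f g h : shom l l'), sheq f g -> sheq g h -> sheq f h
| sheq_comp : forall l1 l2 l3 (g g' : shom l2 l3) (f f' : shom l1 l2),
    sheq g g' -> sheq f f' -> sheq (scomp g f) (scomp g' f')
| sheq_cons : forall x l l' (f f' : shom l l'),
    sheq f f' -> sheq (scons x f) (scons x f')
| sheq_idl : forall l l' (f : shom l l'), sheq (scomp (sid l') f) f
| sheq_idr : forall l l' (f : shom l l'), sheq (scomp f (sid l)) f
| sheq_assoc : forall l1 l2 l3 l4 (h : shom l3 l4) (g : shom l2 l3) (f : shom l1 l2),
    sheq (scomp h (scomp g f)) (scomp (scomp h g) f)
| sheq_cons_id : forall x l, sheq (scons x (sid l)) (sid (x :: l))
| sheq_cons_comp : forall x l1 l2 l3 (g : shom l2 l3) (f : shom l1 l2),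
    sheq (scons x (scomp g f)) (scomp (scons x g) (scons x f))
| sheq_sw_nat : forall a b l l' (f : shom l l'),
    sheq (scomp (ssw a b l') (scons a (scons b f)))
         (scomp (scons b (scons a f)) (ssw a b l))
| sheq_sw_inv : forall a b l,
    sheq (scomp (ssw b a l) (ssw a b l)) (sid (a :: b :: l))
| sheq_yb : forall a b c l,
    sheq (scomp (ssw b c (a :: l)) (scomp (scons b (ssw a c l)) (ssw a b (c :: l))))
         (scomp (scons c (ssw a b l)) (scomp (ssw a c (b :: l)) (scons a (ssw b c l)))).

(** * The weight, on the level of words in the generators s_i (encoded by i).
    Composition in (B G)^op reverses the order: w (g ∘ f) = w f · w g. *)
Fixpoint weight l l' (f : shom l l') : list nat :=
  match f with
  | sid _ => []
  | scomp g f => weight f ++ weight g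
  | ssw _ _ _ => [0]
  | scons _ f => map S (weight f)
  end.

End SList.

Arguments sid {C}.
Arguments ssw {C}.

(** * The Coxeter group \overline{A_infty}: words in the generators s_i (i : nat)
    modulo the congruence generated by the Coxeter relations.  Since every
    generator is an involution, the monoid with this presentation is the
    group with this presentation. *)
Inductive cox_rel : list nat -> list nat -> Prop :=
| cox_sq : forall i, cox_rel [i; i] []
| cox_braid : forall i, cox_rel [i; S i; i; S i; i; S i] []
| cox_comm : forall i j, S i < j \/ S j < i -> cox_rel [i; j; i; j] [].

Inductive cox_eq : list nat -> list nat -> Prop :=
| cox_eq_rel : forall u v r r', cox_rel r r' -> cox_eq (u ++ r ++ v) (u ++ r' ++ v)
| cox_eq_refl : forall u, cox_eq u u
| cox_eq_sym : forall u v, cox_eq u v -> cox_eq v u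
| cox_eq_trans : forall u v w, cox_eq u v -> cox_eq v w -> cox_eq u w.

(* Main.v *)
Require Import Defs.
From Stdlib Require Import List.
From Stdlib Require Import List Arith Lia Setoid Morphisms Eqdep.
Import ListNotations.

Definition sw (i n : nat) : nat :=
  if n =? i then S i else if n =? S i then i else n.

Fixpoint perm {C : Type} {l l' : list C} (f : shom l l') : nat -> nat :=
  match f with
  | sid _ => fun n => n
  | scomp g h => fun n => perm g (perm h n)
  | ssw _ _ _ => sw 0
  | scons _ h => fun n => match n with 0 => 0 | S n => S (perm h n) end
  end.

Lemma perm_sound {C} (l l' : list C) (f g : shom l l') :
  sheq f g -> forall n, perm f n = perm g n.
Proof.
  induction 1; intro n; simpl; try congruence;
  try (destruct n as [|[|[|n]]]; reflexivity);
  try (destruct n; simpl; congruence).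
Qed.

Fixpoint interp (w : list nat) (n : nat) : nat :=
  match w with [] => n | i :: w => interp w (sw i n) end.

Lemma interp_app u v n : interp (u ++ v) n = interp v (interp u n).
Proof. revert n; induction u; simpl; auto. Qed.

Lemma swS a n : sw (S a) (S n) = S (sw a n).
Proof. unfold sw; simpl; destruct (n =? a); auto; destruct (n =? S a); auto. Qed.
Lemma sw0 a : sw (S a) 0 = 0.
Proof. reflexivity. Qed.

Lemma interp_mapS w n : interp (map S w) n =
  match n with 0 => 0 | S n' => S (interp w n') end.
Proof.
  revert n; induction w as [|a w IH]; intros [|n]; simpl; auto;
  [rewrite sw0 | rewrite swS]; rewrite IH; reflexivity.
Qed.

Lemma interp_weight {C} (l l' : list C) (f : shom l l') n :
  interp (weight f) n = perm f n.
Proof.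
  revert n; induction f; intro n; simpl; auto.
  - rewrite interp_app, IHf2, IHf1; reflexivity.
  - rewrite interp_mapS; destruct n; auto.
Qed.

Lemma sw_spec a b : (b = a /\ sw a b = S a) \/ (b = S a /\ sw a b = a) \/
  (b <> a /\ b <> S a /\ sw a b = b).
Proof.
  unfold sw; destruct (Nat.eqb_spec b a); [left; auto|].
  destruct (Nat.eqb_spec b (S a)); [right; left; auto| right; right; auto].
Qed.

Ltac sws := repeat match goal with
 | |- context [sw ?a ?b] =>
     lazymatch b with context [sw _ _] => fail | _ =>
       let H := fresh in let H2 := fresh in
       destruct (sw_spec a b) as [[H ->]|[[H ->]|[H [H2 ->]]]]; try lia end
 end.

Lemma interp_rel r r' : cox_rel r r' -> forall n, interp r n = interp r' n.
Proof.
  destruct 1; intro n; simpl; sws.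
Qed.

Lemma interp_cox u v : cox_eq u v -> forall n, interp u n = interp v n.
Proof.
  induction 1; intro n; try congruence.
  rewrite !interp_app, (interp_rel _ _ H); reflexivity.
Qed.

Lemma cox_ctx p s u v : cox_eq u v -> cox_eq (p ++ u ++ s) (p ++ v ++ s).
Proof.
  induction 1.
  - rewrite !app_assoc, <- !(app_assoc (p ++ u)), <- !app_assoc.
    replace (p ++ u ++ r ++ v ++ s) with ((p ++ u) ++ r ++ (v ++ s)) by (rewrite !app_assoc; reflexivity).
    replace (p ++ u ++ r' ++ v ++ s) with ((p ++ u) ++ r' ++ (v ++ s)) by (rewrite !app_assoc; reflexivity).
    apply cox_eq_rel; auto.
  - apply cox_eq_refl.
  - apply cox_eq_sym; auto.
  - eapply cox_eq_trans; eauto.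
Qed.

Lemma cox_app u u' v v' : cox_eq u u' -> cox_eq v v' -> cox_eq (u ++ v) (u' ++ v').
Proof.
  intros H1 H2. apply cox_eq_trans with (u' ++ v).
  - pose proof (cox_ctx [] v _ _ H1). simpl in H. exact H.
  - pose proof (cox_ctx u' [] _ _ H2). rewrite !app_nil_r in H. exact H.
Qed.

Lemma cox_rel_mapS r r' : cox_rel r r' -> cox_rel (map S r) (map S r').
Proof.
  destruct 1; simpl.
  - apply cox_sq.
  - apply (cox_braid (S i)).
  - apply cox_comm; lia.
Qed.

Lemma cox_mapS u v : cox_eq u v -> cox_eq (map S u) (map S v).
Proof.
  induction 1.
  - rewrite !map_app. apply cox_eq_rel, cox_rel_mapS; auto.
  - apply cox_eq_refl.
  - apply cox_eq_sym; auto.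
  - eapply cox_eq_trans; eauto.
Qed.

Lemma rel_ctx u v r r' w1 w2 : cox_rel r r' -> w1 = u ++ r ++ v -> w2 = u ++ r' ++ v -> cox_eq w1 w2.
Proof. intros H -> ->; apply cox_eq_rel; auto. Qed.

Lemma cox_010 : cox_eq [0;1;0] [1;0;1].
Proof.
  apply cox_eq_sym.
  eapply cox_eq_trans.
  { apply cox_eq_sym. apply (rel_ctx [] [1;0;1] [0;1;0;1;0;1] []); [apply (cox_braid 0)|reflexivity|reflexivity]. }
  eapply cox_eq_trans.
  { apply (rel_ctx [0;1;0;1;0] [0;1] [1;1] []); [apply cox_sq|reflexivity|reflexivity]. }
  eapply cox_eq_trans.
  { apply (rel_ctx [0;1;0;1] [1] [0;0] []); [apply cox_sq|reflexivity|reflexivity]. }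
  apply (rel_ctx [0;1;0] [] [1;1] []); [apply cox_sq|reflexivity|reflexivity].
Qed.

Lemma cox_comm0 j : 2 <= j -> cox_eq [j;0] [0;j].
Proof.
  intro Hj.
  eapply cox_eq_trans.
  { apply cox_eq_sym. apply (rel_ctx [j;0] [] [0;j;0;j] []); [apply cox_comm; lia|reflexivity|reflexivity]. }
  eapply cox_eq_trans.
  { apply (rel_ctx [j] [j;0;j] [0;0] []); [apply cox_sq|reflexivity|reflexivity]. }
  apply (rel_ctx [] [0;j] [j;j] []); [apply cox_sq|reflexivity|reflexivity].
Qed.

Lemma cox_comm_w w : cox_eq (map S (map S w) ++ [0]) (0 :: map S (map S w)).
Proof.
  induction w as [|a w IH]; simpl.
  - apply cox_eq_refl.
  - eapply cox_eq_trans.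
    + apply (cox_app [S (S a)] [S (S a)] _ _ (cox_eq_refl _) IH).
    + apply (cox_app [S (S a); 0] [0; S (S a)] (map S (map S w)) _ (cox_comm0 (S (S a)) ltac:(lia)) (cox_eq_refl _)).
Qed.

Lemma weight_sound {C} (l l' : list C) (f g : shom l l') :
  sheq f g -> cox_eq (weight f) (weight g).
Proof.
  induction 1; simpl; try apply cox_eq_refl.
  - apply cox_eq_sym; auto.
  - eapply cox_eq_trans; eauto.
  - apply cox_app; auto.
  - apply cox_mapS; auto.
  - rewrite app_nil_r; apply cox_eq_refl.
  - rewrite app_assoc; apply cox_eq_refl.
  - rewrite map_app; apply cox_eq_refl.
  - rewrite map_map. rewrite <- (map_map S S). apply cox_comm_w.
  - apply (rel_ctx [] [] [0;0] []); [apply cox_sq|reflexivity|reflexivity].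
  - apply cox_010.
Qed.

#[export] Instance sheq_Equiv {C : Type} (l l' : list C) : Equivalence (@sheq C l l').
Proof.
  split.
  - intro; apply sheq_refl.
  - intros ??; apply sheq_sym.
  - intros ???; apply sheq_trans.
Qed.

#[export] Instance scomp_Proper {C : Type} (l1 l2 l3 : list C) :
  Proper (@sheq C l2 l3 ==> @sheq C l1 l2 ==> @sheq C l1 l3) (@scomp C l1 l2 l3).
Proof. intros ?? H ?? H'; apply sheq_comp; auto. Qed.

#[export] Instance scons_Proper {C : Type} (x : C) (l l' : list C) :
  Proper (@sheq C l l' ==> @sheq C (x :: l) (x :: l')) (@scons C x l l').
Proof. intros ?? H; apply sheq_cons; auto. Qed.

Definition hs2 {C : Type} {L M L' M' : list C} (f : shom L M) (g : shom L' M') : Prop :=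
  exists (e1 : L = L') (e2 : M = M'),
    sheq (eq_rect M (fun X => shom L' X) (eq_rect L (fun X => shom X M) f L' e1) M' e2) g.

Ltac uipall := repeat match goal with e : ?a = ?a |- _ =>
  pose proof (UIP_refl _ _ e); subst e end.

Ltac dhs H := let e1 := fresh "e" in let e2 := fresh "e" in
  destruct H as [e1 [e2 H]]; subst; uipall; simpl in H.

Lemma hs2_of_sheq {C} {L M : list C} (f g : shom L M) : sheq f g -> hs2 f g.
Proof. intro H; exists eq_refl, eq_refl; exact H. Qed.

Lemma hs2_sheq {C} {L M : list C} (f g : shom L M) : hs2 f g -> sheq f g.
Proof. intro H; dhs H; exact H. Qed.

Lemma hs2_refl {C} {L M : list C} (f : shom L M) : hs2 f f.
Proof. apply hs2_of_sheq; reflexivity. Qed.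

Lemma hs2_sym {C} {L M L' M' : list C} (f : shom L M) (g : shom L' M') : hs2 f g -> hs2 g f.
Proof. intro H; dhs H; apply hs2_of_sheq; symmetry; exact H. Qed.

Lemma hs2_trans {C} {L M L' M' L'' M'' : list C} (f : shom L M) (g : shom L' M') (h : shom L'' M'') :
  hs2 f g -> hs2 g h -> hs2 f h.
Proof. intros H H'; dhs H; dhs H'; apply hs2_of_sheq; etransitivity; eauto. Qed.

#[export] Instance hs2_Proper {C : Type} (L M L' M' : list C) :
  Proper (@sheq C L M ==> @sheq C L' M' ==> iff) (@hs2 C L M L' M').
Proof.
  intros f f' Hf g g' Hg; split; intro H.
  - eapply hs2_trans; [apply hs2_of_sheq; symmetry; exact Hf|].
    eapply hs2_trans; [exact H|apply hs2_of_sheq; exact Hg].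
  - eapply hs2_trans; [apply hs2_of_sheq; exact Hf|].
    eapply hs2_trans; [exact H|apply hs2_of_sheq; symmetry; exact Hg].
Qed.

Lemma hs2_comp {C} {L M N L' M' N' : list C} (f : shom L M) (g : shom M N)
  (f' : shom L' M') (g' : shom M' N') : hs2 f f' -> hs2 g g' -> hs2 (scomp g f) (scomp g' f').
Proof. intros H H'; dhs H; dhs H'; apply hs2_of_sheq; rewrite H, H'; reflexivity. Qed.

Lemma hs2_cons {C} (x : C) {L M L' M' : list C} (f : shom L M) (f' : shom L' M') :
  hs2 f f' -> hs2 (scons x f) (scons x f').
Proof. intros H; dhs H; apply hs2_of_sheq; rewrite H; reflexivity. Qed.

Lemma hs2_tgt {C} {L M L' M' : list C} (f : shom L M) (g : shom L' M') : hs2 f g -> M = M'.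
Proof. intros [e1 [e2 _]]; exact e2. Qed.

Lemma perm_hs2 {C} {L M L' M' : list C} (f : shom L M) (g : shom L' M') :
  hs2 f g -> forall n, perm f n = perm g n.
Proof. intros H; dhs H; apply perm_sound; exact H. Qed.

Fixpoint swapL {C} (i : nat) (l : list C) {struct l} : list C :=
  match l with
  | [] => []
  | a :: r => match i with
              | 0 => match r with [] => [a] | b :: r' => b :: a :: r' end
              | S i' => a :: swapL i' r
              end
  end.

Fixpoint step {C} (i : nat) (l : list C) {struct l} : shom l (swapL i l) :=
  match l as l0 return shom l0 (swapL i l0) with
  | [] => sid []
  | a :: r => match i as i0 return shom (a :: r) (swapL i0 (a :: r)) with
      | 0 => match r as r0 return shom (a :: r0) (swapL 0 (a :: r0)) with
             | [] => sid [a]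
             | b :: r' => ssw a b r'
             end
      | S i' => scons a (step i' r)
      end
  end.

Lemma swapL_length {C} i (l : list C) : length (swapL i l) = length l.
Proof.
  revert i; induction l as [|a r IH]; intros [|i]; simpl; auto.
  destruct r; simpl; auto.
Qed.

Fixpoint ia {C} (k : nat) (x : C) (m : list C) : list C :=
  match k with 0 => x :: m | S k' => match m with [] => [x] | y :: r => y :: ia k' x r end end.

Fixpoint ins {C} (x : C) (k : nat) (m : list C) : shom (x :: m) (ia k x m) :=
  match k as k0 return shom (x :: m) (ia k0 x m) with
  | 0 => sid (x :: m)
  | S k' => match m as m0 return shom (x :: m0) (ia (S k') x m0) with
            | [] => sid [x]
            | y :: r => scomp (scons y (ins x k' r)) (ssw x y r)
            end
  end.

Lemma lift1 {C} (x y : C) (r P Q r' Q' : list C) (s : shom P Q) (i1 : shom (x::r) P)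
  (i2 : shom (x::r') Q') (t : shom r r') :
  hs2 (scomp s i1) (scomp i2 (scons x t)) ->
  hs2 (scomp (scons y s) (scomp (scons y i1) (ssw x y r)))
      (scomp (scomp (scons y i2) (ssw x y r')) (scons x (scons y t))).
Proof.
  intro H.
  rewrite sheq_assoc, <- sheq_cons_comp.
  rewrite <- sheq_assoc, sheq_sw_nat, sheq_assoc, <- sheq_cons_comp.
  apply hs2_comp; [apply hs2_refl|]. apply hs2_cons; exact H.
Qed.

Lemma lift2 {C} (x y : C) (r P Q Q' : list C) (s : shom P Q) (i1 : shom (x::r) P)
  (i2 : shom (x::r) Q') :
  hs2 (scomp s i1) i2 ->
  hs2 (scomp (scons y s) (scomp (scons y i1) (ssw x y r)))
      (scomp (scons y i2) (ssw x y r)).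
Proof.
  intro H.
  rewrite sheq_assoc, <- sheq_cons_comp.
  apply hs2_comp; [apply hs2_refl|]. apply hs2_cons; exact H.
Qed.

Lemma L3 {C} (x : C) : forall k m, k < length m ->
  hs2 (scomp (step k (ia k x m)) (ins x k m)) (ins x (S k) m).
Proof.
  induction k as [|k IH]; intros [|y r] H; simpl in *; try lia.
  - apply hs2_of_sheq. rewrite sheq_idr, sheq_cons_id, sheq_idl. reflexivity.
  - apply lift2. apply IH; lia.
Qed.

Lemma L3' {C} (x : C) : forall m,
  hs2 (scomp (step (length m) (ia (length m) x m)) (ins x (length m) m)) (ins x (length m) m).
Proof.
  induction m as [|y r IH]; simpl.
  - apply hs2_of_sheq. rewrite sheq_idr. reflexivity.
  - apply lift2. apply IH.
Qed.

Lemma L4 {C} (x : C) : forall i m, S i <= length m ->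
  hs2 (scomp (step i (ia (S i) x m)) (ins x (S i) m)) (ins x i m).
Proof.
  induction i as [|i IH]; intros [|y r] H; simpl in *; try lia.
  - apply hs2_of_sheq. rewrite sheq_cons_id, sheq_idl, sheq_sw_inv. reflexivity.
  - apply lift2. apply IH; lia.
Qed.

Lemma L2 {C} (x : C) : forall k m j, k <= j ->
  hs2 (scomp (step (S j) (ia k x m)) (ins x k m))
      (scomp (ins x k (swapL j m)) (scons x (step j m))).
Proof.
  induction k as [|k IH]; intros m j H.
  - simpl. apply hs2_of_sheq. rewrite sheq_idr, sheq_idl. reflexivity.
  - destruct m as [|y r].
    + destruct j; simpl; apply hs2_of_sheq; rewrite sheq_idr, sheq_idl; reflexivity.
    + destruct j as [|j]; [lia|]. simpl. apply lift1. apply IH; lia.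
Qed.

Lemma L1 {C} (x : C) : forall i k m, S i < k -> k <= length m ->
  hs2 (scomp (step i (ia k x m)) (ins x k m))
      (scomp (ins x k (swapL i m)) (scons x (step i m))).
Proof.
  induction i as [|i IH]; intros k m H1 H2.
  - destruct k as [|[|k]]; try lia. destruct m as [|y [|z r]]; simpl in *; try lia.
    apply hs2_of_sheq.
    rewrite !sheq_cons_comp.
    rewrite <- !sheq_assoc.
    rewrite (sheq_assoc (ssw y z (ia k x r))).
    rewrite sheq_sw_nat.
    rewrite <- !sheq_assoc.
    rewrite sheq_yb. reflexivity.
  - destruct k as [|k]; [lia|]. destruct m as [|y r]; simpl in *; [lia|].
    apply lift1. apply IH; lia.
Qed.

Inductive isNF {C : Type} : forall L M : list C, shom L M -> Prop :=
| nf_nil : isNF [] [] (sid (@nil C))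
| nf_cons : forall x l m k (N : shom l m), k <= length m -> isNF l m N ->
    isNF (x :: l) (ia k x m) (scomp (ins x k m) (scons x N)).

Definition Qp {C : Type} {M M2 : list C} (g : shom M M2) : Prop :=
  forall L (N : shom L M), isNF L M N ->
  exists M3 (N' : shom L M3), isNF L M3 N' /\ hs2 (scomp g N) N'.

Lemma case_a {C} (x : C) l m P Q Q' (N0 : shom l m) (s : shom P Q) (i1 : shom (x :: m) P)
  (X : shom (x :: m) Q') :
  hs2 (scomp s i1) X -> hs2 (scomp s (scomp i1 (scons x N0))) (scomp X (scons x N0)).
Proof.
  intro H. rewrite sheq_assoc. apply hs2_comp; [apply hs2_refl|exact H].
Qed.

Lemma Q_elem {C : Type} : forall (L M : list C) (N : shom L M), isNF L M N -> forall i : nat,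
  exists M3 (N' : shom L M3), isNF L M3 N' /\ hs2 (scomp (step i M) N) N'.
Proof.
  induction 1 as [|x l m k N0 Hk HN IH]; intro i.
  - exists [], (sid []). split; [constructor|]. simpl. destruct i; apply hs2_of_sheq; apply sheq_idl.
  - destruct (Nat.lt_ge_cases (S i) k) as [Hlt|Hge].
    +
      destruct (IH i) as [M3 [N1 [HN1 H1]]].
      pose proof (hs2_tgt _ _ H1) as E. subst M3.
      exists (ia k x (swapL i m)), (scomp (ins x k (swapL i m)) (scons x N1)).
      split; [constructor; auto; rewrite swapL_length; auto|].
      eapply hs2_trans; [apply case_a; apply L1; auto|].
      rewrite <- sheq_assoc, <- sheq_cons_comp.
      apply hs2_comp; [apply hs2_cons; exact H1|apply hs2_refl].
    + destruct (Nat.eq_dec (S i) k) as [Heq|Hne].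
      * subst k. exists (ia i x m), (scomp (ins x i m) (scons x N0)).
        split; [constructor; auto; lia|].
        apply case_a, L4; auto.
      * destruct (Nat.eq_dec i k) as [Heq2|Hne2].
        -- subst k. destruct (Nat.lt_ge_cases i (length m)) as [Hl|Hl].
           ++ exists (ia (S i) x m), (scomp (ins x (S i) m) (scons x N0)).
              split; [constructor; auto; lia|].
              apply case_a, L3; auto.
           ++ assert (i = length m) by lia. subst i.
              exists (ia (length m) x m), (scomp (ins x (length m) m) (scons x N0)).
              split; [constructor; auto|].
              apply case_a, L3'.
        -- destruct i as [|j]; [lia|].
           destruct (IH j) as [M3 [N1 [HN1 H1]]].
           pose proof (hs2_tgt _ _ H1) as E. subst M3.
           exists (ia k x (swapL j m)), (scomp (ins x k (swapL j m)) (scons x N1)).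
           split; [constructor; auto; rewrite swapL_length; auto|].
           eapply hs2_trans; [apply case_a; apply L2; lia|].
           rewrite <- sheq_assoc, <- sheq_cons_comp.
           apply hs2_comp; [apply hs2_cons; exact H1|apply hs2_refl].
Qed.

Fixpoint sconsR {C : Type} (xs : list C) {M M2 : list C} (g : shom M M2)
  : shom (rev_append xs M) (rev_append xs M2) :=
  match xs with [] => g | x :: xs' => sconsR xs' (scons x g) end.

Lemma sconsR_proper {C : Type} (xs : list C) : forall (M M2 : list C) (g g' : shom M M2),
  sheq g g' -> sheq (sconsR xs g) (sconsR xs g').
Proof.
  induction xs; intros; simpl; auto. apply IHxs. rewrite H; reflexivity.
Qed.

Lemma sconsR_sid {C : Type} (xs : list C) : forall (M : list C),
  sheq (sconsR xs (sid M)) (sid (rev_append xs M)).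
Proof.
  induction xs; intros; simpl; [reflexivity|].
  rewrite (sconsR_proper xs _ _ _ _ (sheq_cons_id _ _)). apply IHxs.
Qed.

Lemma sconsR_comp {C : Type} (xs : list C) : forall (M1 M2 M3 : list C)
  (g : shom M2 M3) (f : shom M1 M2),
  sheq (sconsR xs (scomp g f)) (scomp (sconsR xs g) (sconsR xs f)).
Proof.
  induction xs; intros; simpl; [reflexivity|].
  rewrite (sconsR_proper xs _ _ _ _ (sheq_cons_comp _ _ _)). apply IHxs.
Qed.

Lemma sconsR_hs2 {C : Type} (xs : list C) (M M2 M' M2' : list C) (g : shom M M2) (g' : shom M' M2') :
  hs2 g g' -> hs2 (sconsR xs g) (sconsR xs g').
Proof. intro H; dhs H; apply hs2_of_sheq, sconsR_proper; auto. Qed.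

Lemma sconsR_step {C : Type} (xs : list C) : forall (M M2 : list C) (g : shom M M2) i,
  hs2 g (step i M) -> hs2 (sconsR xs g) (step (length xs + i) (rev_append xs M)).
Proof.
  induction xs as [|x xs IH]; intros M M2 g i H; simpl; auto.
  replace (S (length xs + i)) with (length xs + S i) by lia.
  apply IH. simpl. apply hs2_cons; auto.
Qed.

Lemma Q_sheq {C : Type} (M M2 : list C) (g g' : shom M M2) : sheq g g' -> Qp g -> Qp g'.
Proof.
  intros H Q L N HN. destruct (Q L N HN) as [M3 [N' [H1 H2]]].
  exists M3, N'; split; auto. rewrite <- H; auto.
Qed.

Lemma Q_hs2 {C : Type} (M M2 M' M2' : list C) (g : shom M M2) (g' : shom M' M2') :
  hs2 g g' -> Qp g -> Qp g'.
Proof. intro H; dhs H; apply Q_sheq; auto. Qed.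

Lemma Q_comp {C : Type} (M1 M2 M3 : list C) (g : shom M2 M3) (f : shom M1 M2) :
  Qp g -> Qp f -> Qp (scomp g f).
Proof.
  intros Qg Qf L N HN. destruct (Qf L N HN) as [M4 [N1 [H1 H2]]].
  pose proof (hs2_tgt _ _ H2) as E; subst M4.
  destruct (Qg L N1 H1) as [M5 [N2 [H3 H4]]].
  exists M5, N2; split; auto.
  rewrite <- sheq_assoc. eapply hs2_trans; [|exact H4].
  apply hs2_comp; [exact H2|apply hs2_refl].
Qed.

Lemma Q_sid {C : Type} (M : list C) : Qp (sid M).
Proof.
  intros L N HN. exists M, N; split; auto. rewrite sheq_idl; apply hs2_refl.
Qed.

Lemma Q_step {C : Type} (i : nat) (M : list C) : Qp (step i M).
Proof. intros L N HN. apply Q_elem; auto. Qed.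

Lemma QR {C : Type} : forall (M M2 : list C) (g : shom M M2) (xs : list C), Qp (sconsR xs g).
Proof.
  induction g; intro xs.
  - eapply Q_sheq; [symmetry; apply sconsR_sid|apply Q_sid].
  - eapply Q_sheq; [symmetry; apply sconsR_comp|apply Q_comp; auto].
  - eapply Q_hs2; [apply hs2_sym; apply (sconsR_step xs _ _ (ssw a b l) 0)|apply Q_step].
    simpl. apply hs2_refl.
  - apply (IHg (x :: xs)).
Qed.

Fixpoint NFid {C : Type} (L : list C) : shom L L :=
  match L with [] => sid [] | x :: l => scomp (ins x 0 l) (scons x (NFid l)) end.

Lemma NFid_NF {C : Type} (L : list C) : isNF L L (NFid L).
Proof. induction L; simpl; [constructor|]. apply (nf_cons a L L 0); auto; lia. Qed.

Lemma NFid_sid {C : Type} (L : list C) : sheq (NFid L) (sid L).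
Proof.
  induction L; simpl; [reflexivity|]. rewrite IHL, sheq_cons_id, sheq_idl; reflexivity.
Qed.

Lemma NF_exists {C : Type} (L M : list C) (f : shom L M) :
  exists M3 (N : shom L M3), isNF L M3 N /\ hs2 f N.
Proof.
  destruct (QR L M f [] L (NFid L) (NFid_NF L)) as [M3 [N [H1 H2]]].
  exists M3, N; split; auto. simpl in H2. rewrite NFid_sid, sheq_idr in H2. exact H2.
Qed.

Lemma perm_ins0 {C : Type} (x : C) : forall k m, k <= length m -> perm (ins x k m) 0 = k.
Proof.
  induction k as [|k IH]; intros [|y r] H; simpl in *; try lia; auto.
  rewrite IH; auto; lia.
Qed.

Lemma perm_insS {C : Type} (x : C) : forall k m j, k <= length m ->
  perm (ins x k m) (S j) = if j <? k then j else S j.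
Proof.
  induction k as [|k IH]; intros [|y r] j H; simpl in *; try lia; auto.
  destruct j as [|j]; simpl; auto.
  rewrite IH by lia. destruct (Nat.ltb_spec j k), (Nat.ltb_spec (S j) (S k)); lia.
Qed.

Lemma skip_inj k a b : (if a <? k then a else S a) = (if b <? k then b else S b) -> a = b.
Proof.
  destruct (Nat.ltb_spec a k), (Nat.ltb_spec b k); lia.
Qed.

Lemma NF_unique {C : Type} : forall (L M : list C) (N : shom L M), isNF L M N ->
  forall L' M' (N' : shom L' M'), isNF L' M' N' -> L = L' ->
  (forall n, perm N n = perm N' n) -> hs2 N N'.
Proof.
  induction 1 as [|x l m k N0 Hk HN IH]; destruct 1 as [|x' l' m' k' N0' Hk' HN']; intros E P;
    try discriminate.
  - apply hs2_refl.
  - injection E; intros; subst x' l'.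
    pose proof (P 0) as P0. simpl in P0. rewrite !perm_ins0 in P0 by auto. subst k'.
    assert (IH' : hs2 N0 N0').
    { apply IH with (1 := HN'); auto. intro n. specialize (P (S n)). simpl in P.
      rewrite !perm_insS in P by auto. apply skip_inj in P. exact P. }
    pose proof (hs2_tgt _ _ IH') as Em. subst m'.
    apply hs2_comp; [apply hs2_cons; exact IH'|apply hs2_refl].
Qed.

Theorem theorem2p8 (C : Type) (L L' : list C) (f g : shom L L') :
  sheq f g <-> cox_eq (weight f) (weight g).
Proof.
  split; [apply weight_sound|].
  intro H.
  assert (P : forall n, perm f n = perm g n).
  { intro n. rewrite <- !interp_weight. apply interp_cox; auto. }
  destruct (NF_exists _ _ f) as [M1 [N1 [HN1 H1]]].
  destruct (NF_exists _ _ g) as [M2 [N2 [HN2 H2]]].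
  assert (H12 : hs2 N1 N2).
  { apply NF_unique with (1 := HN1) (2 := HN2); auto.
    intro n. rewrite <- (perm_hs2 _ _ H1), <- (perm_hs2 _ _ H2). apply P. }
  apply hs2_sheq. eapply hs2_trans; [exact H1|]. eapply hs2_trans; [exact H12|].
  apply hs2_sym; exact H2.
Qed.

Print Assumptions theorem2p8.
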